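(* Let $I$ be a nonempty open real interval, let $t\in\,]0,1[\,$, let $f,g:I\to\mathbb{R}$ be such that $f$ is positive everywhere on $I$ and $g/f$ is continuous and strictly monotone on $I$, and let $h:I\to\mathbb{R}$ be a continuous strictly monotone function. Then \[ \Big(\frac{g}{f}\Big)^{-1}\!\left(\frac{tg(x)+(1-t)g(y)}{tf(x)+(1-t)f(y)}\right)=h^{-1}\big(th(x)+(1-t)h(y)\big)\qquad\text{for all } x,y\in I \] holds if and only if there exists $p\in\mathbb{R}$ with $(t-\frac12)p=0$ such that $(f,g)\sim(S_p\circ h,C_p\circ h)$ on $I$.
   Context: For $p\in\mathbb{R}$, the functions $S_p,C_p:\mathbb{R}\to\mathbb{R}$ are defined by $S_p(x)=\sin(\sqrt{-p}\,x)$, $C_p(x)=\cos(\sqrt{-p}\,x)$ if $p<0$; $S_p(x)=x$, $C_p(x)=1$ if $p=0$; $S_p(x)=\sinh(\sqrt{p}\,x)$, $C_p(x)=\cosh(\sqrt{p}\,x)$ if $p>0$. Two pairs of functions $(f,g):I\to\mathbb{R}^2$ and $(u,v):I\to\mathbb{R}^2$ are called equivalent, written $(f,g)\sim(u,v)$, if there exist constants $a,b,c,d\in\mathbb{R}$ with $ad\neq cb$ such that $u=af+bg$ and $v=cf+dg$ on $I$. *)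

(* Defs.v *)
From Stdlib Require Import Reals ClassicalEpsilon.
From Coquelicot Require Import Coquelicot.
Open Scope R_scope.

Definition in_I (a b : Rbar) (x : R) : Prop := Rbar_lt a x /\ Rbar_lt x b.

Definition Sp (p x : R) : R :=
  match total_order_T p 0 with
  | inleft (left _) => sin (sqrt (- p) * x)
  | inleft (right _) => x
  | inright _ => sinh (sqrt p * x)
  end.

Definition Cp (p x : R) : R :=
  match total_order_T p 0 with
  | inleft (left _) => cos (sqrt (- p) * x)
  | inleft (right _) => 1
  | inright _ => cosh (sqrt p * x)
  end.

Definition continuous_on_set (I : R -> Prop) (phi : R -> R) : Prop :=
  forall x, I x -> continuity_pt phi x.

Definition strict_mono_on (I : R -> Prop) (phi : R -> R) : Prop :=
  (forall x y, I x -> I y -> x < y -> phi x < phi y) \/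
  (forall x y, I x -> I y -> x < y -> phi y < phi x).

(* The inverse of phi restricted to I: some z in I with phi z = y
   (unique when phi is injective on I and y is in phi(I)). *)
Definition inv_on (I : R -> Prop) (phi : R -> R) (y : R) : R :=
  epsilon (inhabits 0) (fun z => I z /\ phi z = y).

Definition pair_equiv_on (I : R -> Prop) (f g u v : R -> R) : Prop :=
  exists a b c d : R, a * d <> c * b /\
    forall x, I x -> u x = a * f x + b * g x /\ v x = c * f x + d * g x.

(* Main.v *)
Require Import Defs.
From Stdlib Require Import Reals Lra Lia Psatz ClassicalEpsilon.
From Coquelicot Require Import Coquelicot.
Open Scope R_scope.

Fixpoint Ck (k : nat) (f : R -> R) (x : R) : Prop :=
  match k with
  | O => continuity_pt f x
  | S k => locally x (fun y => ex_derive f y) /\ Ck k (Derive f) x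
  end.

Lemma locally_neq0 (c : R) : c <> 0 -> locally c (fun z => z <> 0).
Proof.
  intros H. exists (mkposreal (Rabs c) (Rabs_pos_lt c H)).
  intros y Hy. unfold ball in Hy; simpl in Hy. unfold AbsRing_ball, abs, minus, plus, opp in Hy; simpl in Hy.
  intros E; subst. rewrite Rplus_0_l, Rabs_Ropp in Hy. lra.
Qed.

Lemma cont_locally (f : R -> R) x (P : R -> Prop) :
  continuity_pt f x -> locally (f x) P -> locally x (fun y => P (f y)).
Proof.
  intros Hc HP. apply continuity_pt_filterlim in Hc. exact (Hc P HP).
Qed.

Lemma Ck_ext k : forall f g x, locally x (fun y => f y = g y) -> Ck k f x -> Ck k g x.
Proof.
  induction k as [|k IH]; intros f g x Hl H; simpl in *.
  - apply continuity_pt_filterlim. apply (continuous_ext_loc g f).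
    + apply filter_imp with (2 := Hl). intros y Hy; auto.
    + apply continuity_pt_filterlim. exact H.
  - destruct H as [H1 H2]. split.
    + generalize (filter_and _ _ (locally_locally _ _ Hl) H1). apply filter_imp.
      intros y [Hy Hd]. apply (ex_derive_ext_loc f g); auto.
    + apply (IH (Derive f)); auto.
      apply filter_imp with (2 := locally_locally _ _ Hl). intros y Hy. apply Derive_ext_loc. exact Hy.
Qed.

Lemma Ck_mono k : forall f x, Ck (S k) f x -> Ck k f x.
Proof.
  induction k as [|k IH]; intros f x H; simpl in *.
  - destruct H as [H1 _]. apply derivable_continuous_pt, ex_derive_Reals_0.
    exact (locally_singleton _ _ H1).
  - destruct H as [H1 H2]. split; auto.
Qed.

Lemma Ck_cont k : forall f x, Ck k f x -> continuity_pt f x.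
Proof.
  induction k as [|k IH]; intros f x H; auto. apply IH, Ck_mono, H.
Qed.

Lemma Ck_plus k : forall f g x, Ck k f x -> Ck k g x -> Ck k (fun y => f y + g y) x.
Proof.
  induction k as [|k IH]; intros f g x Hf Hg; simpl in *.
  - apply continuity_pt_plus; auto.
  - destruct Hf as [Hf1 Hf2], Hg as [Hg1 Hg2]. split.
    + generalize (filter_and _ _ Hf1 Hg1). apply filter_imp. intros y [A B].
      apply (ex_derive_plus f g); auto.
    + apply (Ck_ext k (fun y => Derive f y + Derive g y)); auto.
      generalize (filter_and _ _ Hf1 Hg1). apply filter_imp. intros y [A B].
      symmetry. apply (Derive_plus f g); auto.
Qed.

Lemma Ck_scal k : forall c f x, Ck k f x -> Ck k (fun y => c * f y) x.
Proof.
  induction k as [|k IH]; intros c f x Hf; simpl in *.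
  - apply continuity_pt_scal; auto.
  - destruct Hf as [Hf1 Hf2]. split.
    + apply filter_imp with (2 := Hf1). intros y A. apply ex_derive_scal; auto.
    + apply (Ck_ext k (fun y => c * Derive f y)); auto.
      apply filter_forall. intros y. symmetry. apply Derive_scal.
Qed.

Lemma Ck_const k : forall c x, Ck k (fun _ => c) x.
Proof.
  induction k as [|k IH]; intros c x; simpl.
  - apply continuity_pt_const. intros a b; auto.
  - split.
    + apply filter_forall. intros; apply ex_derive_const.
    + apply (Ck_ext k (fun _ => 0)); auto. apply filter_forall. intros y. symmetry. apply Derive_const.
Qed.

Lemma Ck_mult k : forall f g x, Ck k f x -> Ck k g x -> Ck k (fun y => f y * g y) x.
Proof.
  induction k as [|k IH]; intros f g x Hf Hg.
  - simpl in *. apply continuity_pt_mult; auto.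
  - pose proof (Ck_mono _ _ _ Hf) as Hf0. pose proof (Ck_mono _ _ _ Hg) as Hg0.
    simpl in *. destruct Hf as [Hf1 Hf2], Hg as [Hg1 Hg2]. split.
    + generalize (filter_and _ _ Hf1 Hg1). apply filter_imp. intros y [A B].
      apply (ex_derive_mult f g); auto.
    + apply (Ck_ext k (fun y => Derive f y * g y + f y * Derive g y)).
      * generalize (filter_and _ _ Hf1 Hg1). apply filter_imp. intros y [A B].
        symmetry. apply (Derive_mult f g); auto.
      * apply Ck_plus; apply IH; auto.
Qed.

Lemma Ck_inv k : forall f x, Ck k f x -> f x <> 0 -> Ck k (fun y => / f y) x.
Proof.
  induction k as [|k IH]; intros f x Hf Hn.
  - simpl in *. apply continuity_pt_inv; auto.
  - pose proof (Ck_mono _ _ _ Hf) as Hf0.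
    assert (Hl : locally x (fun y => f y <> 0)).
    { apply (cont_locally f x (fun z => z <> 0)). apply (Ck_cont _ _ _ Hf). apply locally_neq0; auto. }
    simpl in *. destruct Hf as [Hf1 Hf2]. split.
    + generalize (filter_and _ _ Hf1 Hl). apply filter_imp. intros y [A B].
      apply (ex_derive_inv f); auto.
    + apply (Ck_ext k (fun y => (-1) * Derive f y * ((/ f y) * (/ f y)))).
      * generalize (filter_and _ _ Hf1 Hl). apply filter_imp. intros y [A B].
        rewrite (Derive_inv f); auto. field; auto.
      * apply Ck_mult. apply Ck_scal; auto. apply Ck_mult; apply IH; auto.
Qed.

Lemma locally_aff (a b x : R) (P : R -> Prop) :
  locally (a * x + b) P -> locally x (fun y => P (a * y + b)).
Proof.
  intros H. apply (cont_locally (fun y => a * y + b) x P); auto.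
  apply continuity_pt_plus. apply continuity_pt_scal. apply continuity_pt_id.
  apply continuity_pt_const. intros u v; auto.
Qed.

Lemma Derive_aff (f : R -> R) a b y : ex_derive f (a * y + b) ->
  Derive (fun z => f (a * z + b)) y = a * Derive f (a * y + b).
Proof.
  intros H. rewrite (Derive_comp f (fun z => a * z + b)); auto.
  f_equal. apply is_derive_unique. auto_derive; auto. ring.
  auto_derive; auto.
Qed.

Lemma Ck_aff k : forall f a b x, Ck k f (a * x + b) -> Ck k (fun y => f (a * y + b)) x.
Proof.
  induction k as [|k IH]; intros f a b x Hf.
  - simpl in *. apply (continuity_pt_comp (fun y => a * y + b) f); auto.
    apply continuity_pt_plus. apply continuity_pt_scal. apply continuity_pt_id.
    apply continuity_pt_const. intros u v; auto.
  - simpl in *. destruct Hf as [Hf1 Hf2].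
    pose proof (locally_aff a b x _ Hf1) as H1. split.
    + apply filter_imp with (2 := H1). intros y A.
      apply (ex_derive_comp f (fun z => a * z + b)); auto. auto_derive; auto.
    + apply (Ck_ext k (fun y => a * Derive f (a * y + b))).
      * apply filter_imp with (2 := H1). intros y A. symmetry. apply Derive_aff; auto.
      * apply Ck_scal. apply IH. auto.
Qed.

Lemma Ck_id k : forall x, Ck k (fun y => y) x.
Proof.
  intros x. destruct k as [|k].
  - apply continuity_pt_id.
  - simpl. split. apply filter_forall. intros; auto_derive; auto.
    apply (Ck_ext k (fun _ => 1)). apply filter_forall. intros y. symmetry. apply Derive_id.
    apply Ck_const.
Qed.

Definition Sm (f : R -> R) (x : R) : Prop := forall k, Ck k f x.

Fixpoint Dk (n : nat) (f : R -> R) : R -> R :=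
  match n with O => f | S n => Dk n (Derive f) end.

Lemma Dk_ext n : forall f g x, locally x (fun y => f y = g y) -> Dk n f x = Dk n g x.
Proof.
  induction n as [|n IH]; intros f g x Hl; simpl.
  - exact (locally_singleton _ _ Hl).
  - apply IH. apply filter_imp with (2 := locally_locally _ _ Hl). intros y Hy. apply Derive_ext_loc; auto.
Qed.

Lemma Sm_D f x : Sm f x -> Sm (Derive f) x.
Proof. intros H k. exact (proj2 (H (S k))). Qed.

Lemma Sm_locex f x : Sm f x -> locally x (fun y => ex_derive f y).
Proof. intros H. exact (proj1 (H 1%nat)). Qed.

Lemma Dk_plus n : forall f g x, Sm f x -> Sm g x ->
  Dk n (fun y => f y + g y) x = Dk n f x + Dk n g x.
Proof.
  induction n as [|n IH]; intros f g x Hf Hg; simpl; auto.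
  rewrite <- IH by (apply Sm_D; auto).
  apply Dk_ext. generalize (filter_and _ _ (Sm_locex _ _ Hf) (Sm_locex _ _ Hg)). apply filter_imp.
  intros y [A B]. apply (Derive_plus f g); auto.
Qed.

Lemma Dk_scal n : forall c f x, Dk n (fun y => c * f y) x = c * Dk n f x.
Proof.
  induction n as [|n IH]; intros c f x; simpl; auto.
  rewrite <- IH. apply Dk_ext. apply filter_forall. intros y. apply Derive_scal.
Qed.

Lemma Dk_zero n : forall x, Dk n (fun _ => 0) x = 0.
Proof.
  induction n as [|n IH]; intros x; simpl; auto.
  rewrite <- (IH x). apply Dk_ext. apply filter_forall. intros y. apply Derive_const.
Qed.

Lemma Dk_aff n : forall f a b x, Sm f (a * x + b) ->
  Dk n (fun y => f (a * y + b)) x = a ^ n * Dk n f (a * x + b).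
Proof.
  induction n as [|n IH]; intros f a b x Hf; simpl. ring.
  rewrite (Dk_ext n _ (fun y => a * Derive f (a * y + b))).
  - rewrite Dk_scal. rewrite IH. ring. apply Sm_D; auto.
  - apply filter_imp with (2 := locally_aff a b x _ (Sm_locex _ _ Hf)).
    intros y A. apply Derive_aff; auto.
Qed.

Lemma Sm_plus f g x : Sm f x -> Sm g x -> Sm (fun y => f y + g y) x.
Proof. intros A B k; apply Ck_plus; auto. Qed.
Lemma Sm_scal c f x : Sm f x -> Sm (fun y => c * f y) x.
Proof. intros A k; apply Ck_scal; auto. Qed.
Lemma Sm_aff f a b x : Sm f (a * x + b) -> Sm (fun y => f (a * y + b)) x.
Proof. intros A k; apply Ck_aff; auto. Qed.

Lemma locally_open_interval (l r x : R) : l < x < r -> locally x (fun y => l < y < r).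
Proof.
  intros H. assert (Hp : 0 < Rmin (x - l) (r - x)) by (apply Rmin_pos; lra).
  exists (mkposreal _ Hp). intros y Hy. unfold ball in Hy; simpl in Hy.
  unfold AbsRing_ball, abs, minus, plus, opp in Hy; simpl in Hy.
  pose proof (Rmin_l (x - l) (r - x)). pose proof (Rmin_r (x - l) (r - x)).
  apply Rabs_def2 in Hy. lra.
Qed.

Lemma is_derive_RInt_open (X : R -> R) (l r c y : R) :
  (forall z, l < z < r -> continuity_pt X z) -> l < c < r -> l < y < r ->
  is_derive (fun u => RInt X c u) y (X y).
Proof.
  intros Hc Hcc Hy. apply is_derive_RInt with (a := c).
  - apply filter_imp with (2 := locally_open_interval l r y Hy). intros b Hb.
    apply RInt_correct. apply ex_RInt_continuous. intros z Hz.
    apply continuity_pt_filterlim. apply Hc.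
    pose proof (Rmin_l c b). pose proof (Rmin_r c b). pose proof (Rmax_l c b). pose proof (Rmax_r c b).
    destruct (Rle_dec c b) as [Hle|Hle].
    + rewrite Rmin_left in Hz by lra. rewrite Rmax_right in Hz by lra. lra.
    + rewrite Rmin_right in Hz by lra. rewrite Rmax_left in Hz by lra. lra.
  - apply continuity_pt_filterlim. apply Hc; auto.
Qed.

Lemma Ck_RInt k (X : R -> R) (l r c y : R) :
  (forall z, l < z < r -> continuity_pt X z) -> l < c < r -> l < y < r ->
  Ck k X y -> Ck (S k) (fun u => RInt X c u) y.
Proof.
  intros Hc Hcc Hy Hk. simpl. split.
  - apply filter_imp with (2 := locally_open_interval l r y Hy). intros b Hb.
    eexists. apply (is_derive_RInt_open X l r c b); auto.
  - apply (Ck_ext k X); auto.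
    apply filter_imp with (2 := locally_open_interval l r y Hy). intros b Hb.
    symmetry. apply is_derive_unique. apply (is_derive_RInt_open X l r c b); auto.
Qed.

Lemma exRInt_seg (X : R -> R) l r a b : (forall z, l < z < r -> continuity_pt X z) ->
  l < a < r -> l < b < r -> ex_RInt X a b.
Proof.
  intros Hc Ha Hb. apply (@ex_RInt_continuous R_CompleteNormedModule). intros z Hz. apply continuity_pt_filterlim. apply Hc.
  pose proof (Rmin_l a b). pose proof (Rmin_r a b). pose proof (Rmax_l a b). pose proof (Rmax_r a b).
  destruct (Rle_dec a b) as [Hle|Hle].
  + rewrite Rmin_left in Hz by lra. rewrite Rmax_right in Hz by lra. lra.
  + rewrite Rmin_right in Hz by lra. rewrite Rmax_left in Hz by lra. lra.
Qed.

Lemma window (X : R -> R) (l r c s a dl : R) :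
  (forall z, l < z < r -> continuity_pt X z) -> l < c < r -> a <> 0 ->
  l < s < r -> l < a * dl + s < r -> 0 <= dl ->
  RInt (fun d => X (a * d + s)) 0 dl = (RInt X c (a * dl + s) - RInt X c s) / a.
Proof.
  intros Hc Hcc Ha Hs Hd Hdl.
  assert (Hseg : forall d, 0 <= d <= dl -> l < a * d + s < r).
  { intros d Hd'. destruct (Rle_dec 0 a).
    - assert (a * 0 <= a * d <= a * dl) by (split; apply Rmult_le_compat_l; lra). lra.
    - assert (a * dl <= a * d <= a * 0) by (split; apply Rmult_le_compat_neg_l; lra). lra. }
  assert (Hex : ex_RInt X (a * 0 + s) (a * dl + s)).
  { apply (exRInt_seg X l r); auto. rewrite Rmult_0_r, Rplus_0_l; auto. }
  pose proof (RInt_comp_lin X a s 0 dl Hex) as E.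
  assert (Hex2 : ex_RInt (fun d => X (a * d + s)) 0 dl).
  { apply (@ex_RInt_continuous R_CompleteNormedModule). intros z Hz. rewrite Rmin_left in Hz by lra. rewrite Rmax_right in Hz by lra.
    apply continuity_pt_filterlim.
    apply (continuity_pt_comp (fun y => a * y + s) X).
    apply continuity_pt_plus. apply continuity_pt_scal. apply continuity_pt_id.
    apply continuity_pt_const. intros u v; auto. apply Hc, Hseg; auto. }
  rewrite RInt_scal in E by exact Hex2.
  rewrite Rmult_0_r, Rplus_0_l in E.
  rewrite <- (RInt_Chasles X c s (a * dl + s)).
  2: apply (exRInt_seg X l r); auto.
  2: apply (exRInt_seg X l r); auto.
  assert (E' : a * RInt (fun x : R => X (a * x + s)) 0 dl = RInt X s (a * dl + s)) by exact E.
  transitivity ((RInt X c s + RInt X s (a * dl + s) - RInt X c s) / a). 2: reflexivity.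
  change (@eq R (RInt (fun d => X (a*d+s)) 0 dl) ((RInt X c s + RInt X s (a * dl + s) - RInt X c s) / a)).
  assert (K : forall B C D : R, a * B = D -> B = (C + D - C) / a) by (intros; subst; field; auto).
  apply K. exact E'.
Qed.

Lemma Ck_minus k f g x : Ck k f x -> Ck k g x -> Ck k (fun y => f y - g y) x.
Proof.
  intros A B. apply (Ck_ext k (fun y => f y + (-1) * g y)).
  apply filter_forall; intros; ring. apply Ck_plus; auto. apply Ck_scal; auto.
Qed.

Lemma Ck_shift k f c x : Ck k f (c + x) -> Ck k (fun y => f (c + y)) x.
Proof.
  intros A. apply (Ck_ext k (fun y => f (1 * y + c))).
  apply filter_forall; intros; f_equal; ring. apply Ck_aff.
  replace (1 * x + c) with (c + x) by ring. auto.
Qed.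

Record Hyp (J : R -> Prop) (t : R) (F G P : R -> R) : Prop := {
  h_t : 0 < t < 1;
  h_conv : forall u v w, J u -> J v -> u <= w <= v -> J w;
  h_open : forall s, J s -> exists r, 0 < r /\ forall y, Rabs (y - s) < r -> J y;
  h_F : forall s, J s -> 0 < F s;
  h_G : forall s, J s -> G s = P s * F s;
  h_cont : forall s, J s -> continuity_pt P s;
  h_inj : forall u v, J u -> J v -> P u = P v -> u = v;
  h_eq : forall u v, J u -> J v ->
    t * G u + (1 - t) * G v = P (t * u + (1 - t) * v) * (t * F u + (1 - t) * F v)
}.




Lemma J_mix J t F G P (H : Hyp J t F G P) u v : J u -> J v -> J (t * u + (1 - t) * v).
Proof.
  intros Hu Hv. pose proof (h_t _ _ _ _ _ H) as Ht.
  destruct (Rle_dec u v) as [Hle|Hle].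
  - apply (h_conv _ _ _ _ _ H u v); auto. split; nra.
  - apply (h_conv _ _ _ _ _ H v u); auto. split; nra.
Qed.

Lemma locally_J J t F G P (H : Hyp J t F G P) s : J s -> locally s J.
Proof.
  intros Hs. destruct (h_open _ _ _ _ _ H s Hs) as [r [Hr Hy]].
  exists (mkposreal r Hr). intros y Hb. apply Hy. exact Hb.
Qed.

Lemma F_formula J t F G P (H : Hyp J t F G P) u v : J u -> J v -> u <> v ->
  F u = (1 - t) * F v * (P (t * u + (1 - t) * v) - P v) * / (t * (P u - P (t * u + (1 - t) * v))).
Proof.
  intros Hu Hv Huv. pose proof (h_t _ _ _ _ _ H) as Ht.
  set (w := t * u + (1 - t) * v).
  assert (Hw : J w) by (apply (J_mix _ _ _ _ _ H); auto).
  assert (Hne : P u - P w <> 0).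
  { intros E. assert (u = w) by (apply (h_inj _ _ _ _ _ H); auto; lra).
    unfold w in H0. apply Huv. nra. }
  pose proof (h_eq _ _ _ _ _ H u v Hu Hv) as E. fold w in E.
  rewrite (h_G _ _ _ _ _ H u Hu), (h_G _ _ _ _ _ H v Hv) in E.
  assert (K : t * F u * (P u - P w) = (1 - t) * F v * (P w - P v)) by nra.
  rewrite <- K. field. split; lra.
Qed.

Lemma step_F J t F G P (H : Hyp J t F G P) k :
  (forall s, J s -> Ck k P s) -> forall s, J s -> Ck k F s.
Proof.
  intros HP s Hs. pose proof (h_t _ _ _ _ _ H) as Ht.
  destruct (h_open _ _ _ _ _ H s Hs) as [r [Hr Hy]].
  set (v := s + r / 2).
  assert (Hv : J v) by (apply Hy; unfold v; rewrite Rabs_right; lra).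
  assert (Hsv : s - v <> 0) by (unfold v; lra).
  assert (Hl : locally s (fun y => J y /\ y - v <> 0)).
  { apply filter_and. apply (locally_J _ _ _ _ _ H s Hs).
    apply (cont_locally (fun y => y - v) s (fun z => z <> 0)).
    apply continuity_pt_minus. apply continuity_pt_id. apply continuity_pt_const. intros a b; auto.
    apply locally_neq0; auto. }
  apply (Ck_ext k (fun u => (1 - t) * F v * (P (t * u + (1 - t) * v) - P v) * / (t * (P u - P (t * u + (1 - t) * v))))).
  - apply filter_imp with (2 := Hl). intros y [Hy1 Hy2]. symmetry. apply (F_formula _ _ _ _ _ H); auto. lra.
  - apply Ck_mult.
    + apply Ck_scal. apply Ck_minus. apply (Ck_aff k P). apply HP. apply (J_mix _ _ _ _ _ H); auto.
      apply Ck_const.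
    + apply Ck_inv.
      * apply Ck_scal. apply Ck_minus. apply HP; auto.
        apply (Ck_aff k P). apply HP. apply (J_mix _ _ _ _ _ H); auto.
      * intros E. apply Rmult_integral in E. destruct E as [E|E]. lra.
        assert (s = t * s + (1 - t) * v).
        { apply (h_inj _ _ _ _ _ H); auto. apply (J_mix _ _ _ _ _ H); auto. lra. }
        apply Hsv. nra.
Qed.

Lemma step_G J t F G P (H : Hyp J t F G P) k :
  (forall s, J s -> Ck k P s) -> (forall s, J s -> Ck k F s) -> forall s, J s -> Ck k G s.
Proof.
  intros HP HF s Hs. apply (Ck_ext k (fun y => P y * F y)).
  - apply filter_imp with (2 := locally_J _ _ _ _ _ H s Hs). intros y Hy. symmetry. apply (h_G _ _ _ _ _ H); auto.
  - apply Ck_mult; auto.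
Qed.

Lemma cont_aff_pt (X : R -> R) a s d : continuity_pt X (a * d + s) ->
  continuity_pt (fun d => X (a * d + s)) d.
Proof.
  intros Hc. apply (continuity_pt_comp (fun y => a * y + s) X); auto.
  apply continuity_pt_plus. apply continuity_pt_scal. apply continuity_pt_id.
  apply continuity_pt_const. intros u v; auto.
Qed.

Lemma exRInt_aff (X : R -> R) l r a s dl :
  (forall z, l < z < r -> continuity_pt X z) -> 0 <= dl ->
  (forall d, 0 <= d <= dl -> l < a * d + s < r) ->
  ex_RInt (fun d => X (a * d + s)) 0 dl.
Proof.
  intros Hc Hdl Hseg. apply (@ex_RInt_continuous R_CompleteNormedModule). intros z Hz.
  rewrite Rmin_left in Hz by lra. rewrite Rmax_right in Hz by lra.
  apply continuity_pt_filterlim. apply cont_aff_pt. apply Hc, Hseg; auto.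
Qed.

Definition NX (X : R -> R) (t s0 dl s : R) : R :=
  t / (1 - t) * (RInt X s0 ((1 - t) * dl + s) - RInt X s0 s) +
  (1 - t) / (- t) * (RInt X s0 ((- t) * dl + s) - RInt X s0 s).

Lemma NX_int (X : R -> R) t l r s0 dl s :
  0 < t < 1 -> (forall z, l < z < r -> continuity_pt X z) -> l < s0 < r -> 0 <= dl ->
  (forall d, 0 <= d <= dl -> l < (1 - t) * d + s < r /\ l < (- t) * d + s < r) ->
  RInt (fun d => t * X ((1 - t) * d + s) + (1 - t) * X ((- t) * d + s)) 0 dl = NX X t s0 dl s.
Proof.
  intros Ht Hc Hs0 Hdl Hseg.
  assert (Hs : l < s < r).
  { destruct (Hseg 0) as [A _]. lra. rewrite Rmult_0_r, Rplus_0_l in A. auto. }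
  assert (E1 := window X l r s0 s (1 - t) dl Hc Hs0 ltac:(lra) Hs ltac:(apply Hseg; lra) Hdl).
  assert (E2 := window X l r s0 s (- t) dl Hc Hs0 ltac:(lra) Hs ltac:(apply Hseg; lra) Hdl).
  assert (X1 := exRInt_aff X l r (1 - t) s dl Hc Hdl ltac:(intros; apply Hseg; auto)).
  assert (X2 := exRInt_aff X l r (- t) s dl Hc Hdl ltac:(intros; apply Hseg; auto)).
  unfold NX.
  assert (K : forall A B C D : R, A = C / (1 - t) -> B = D / (- t) ->
     t * A + (1 - t) * B = t / (1 - t) * C + (1 - t) / (- t) * D).
  { intros A B C D -> ->. field. lra. }
  rewrite <- (K _ _ _ _ E1 E2).
  apply is_RInt_unique. apply (@is_RInt_plus R_NormedModule).
  - apply (@is_RInt_scal R_NormedModule). apply (RInt_correct (V := R_CompleteNormedModule)); auto.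
  - apply (@is_RInt_scal R_NormedModule). apply (RInt_correct (V := R_CompleteNormedModule)); auto.
Qed.

Lemma step_P J t F G P (H : Hyp J t F G P) k :
  (forall s, J s -> Ck k F s) -> (forall s, J s -> Ck k G s) -> forall s0, J s0 -> Ck (S k) P s0.
Proof.
  intros HF HG s0 Hs0. pose proof (h_t _ _ _ _ _ H) as Ht.
  destruct (h_open _ _ _ _ _ H s0 Hs0) as [r [Hr Hy]].
  set (l := s0 - r). set (rr := s0 + r).
  assert (HJ : forall z, l < z < rr -> J z).
  { intros z Hz. apply Hy. unfold l, rr in Hz. apply Rabs_def1; lra. }
  set (dl := r / 3).
  assert (HcF : forall z, l < z < rr -> continuity_pt F z) by (intros; apply (Ck_cont k); apply HF, HJ; auto).
  assert (HcG : forall z, l < z < rr -> continuity_pt G z) by (intros; apply (Ck_cont k); apply HG, HJ; auto).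
  assert (Hs0l : l < s0 < rr) by (unfold l, rr; lra).
  assert (Hseg : forall s, Rabs (s - s0) < dl -> forall d, 0 <= d <= dl ->
     l < (1 - t) * d + s < rr /\ l < (- t) * d + s < rr).
  { intros s Hs d Hd. apply Rabs_def2 in Hs. unfold l, rr, dl in *.
    assert (0 <= (1 - t) * d <= dl) by (unfold dl; split; nra).
    assert (0 <= t * d <= dl) by (unfold dl; split; nra). unfold dl in *. split; lra. }
  assert (Hloc : locally s0 (fun s => Rabs (s - s0) < dl)).
  { exists (mkposreal dl ltac:(unfold dl; lra)). intros y Hb. exact Hb. }
  assert (Hdl : 0 < dl) by (unfold dl; lra).
  assert (Key : forall s, Rabs (s - s0) < dl ->
     NX G t s0 dl s = P s * NX F t s0 dl s /\ 0 < NX F t s0 dl s).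
  { intros s Hs.
    rewrite <- (NX_int G t l rr s0 dl s Ht HcG Hs0l ltac:(lra) (Hseg s Hs)).
    rewrite <- (NX_int F t l rr s0 dl s Ht HcF Hs0l ltac:(lra) (Hseg s Hs)).
    split.
    - rewrite (RInt_ext _ (fun d => P s * (t * F ((1 - t) * d + s) + (1 - t) * F ((- t) * d + s)))).
      + apply is_RInt_unique. apply (@is_RInt_scal R_NormedModule).
        apply (RInt_correct (V := R_CompleteNormedModule)).
        apply (@ex_RInt_plus R_NormedModule); apply (@ex_RInt_scal R_NormedModule).
        apply (exRInt_aff F l rr); [exact HcF | lra | intros d Hd; destruct (Hseg s Hs d Hd); auto].
        apply (exRInt_aff F l rr); [exact HcF | lra | intros d Hd; destruct (Hseg s Hs d Hd); auto].
      + intros d Hd. rewrite Rmin_left in Hd by lra. rewrite Rmax_right in Hd by lra.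
        destruct (Hseg s Hs d ltac:(lra)) as [A B].
        rewrite (h_eq _ _ _ _ _ H); try apply HJ; auto. f_equal. f_equal. ring.
    - apply RInt_gt_0; auto.
      + intros d Hd. destruct (Hseg s Hs d ltac:(lra)) as [A B].
        pose proof (h_F _ _ _ _ _ H _ (HJ _ A)). pose proof (h_F _ _ _ _ _ H _ (HJ _ B)). nra.
      + intros d Hd. destruct (Hseg s Hs d ltac:(lra)) as [A B].
        apply continuity_pt_filterlim. apply continuity_pt_plus; apply continuity_pt_scal;
        apply cont_aff_pt; auto. }
  assert (CkN : forall X, (forall z, l < z < rr -> continuity_pt X z) ->
      (forall z, l < z < rr -> Ck k X z) -> Ck (S k) (NX X t s0 dl) s0).
  { intros X Hc Hk. unfold NX.
    assert (A : forall c, l < c + s0 < rr -> Ck (S k) (fun s => RInt X s0 (c + s)) s0).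
    { intros c Hcs. apply Ck_shift. apply (Ck_RInt k X l rr); auto. }
    apply Ck_plus; apply Ck_scal; apply Ck_minus.
    - apply A. unfold l, rr, dl in *. split; nra.
    - apply (Ck_ext _ (fun s => RInt X s0 (0 + s))). apply filter_forall; intros; rewrite Rplus_0_l; auto.
      apply A. lra.
    - apply A. unfold l, rr, dl in *. split; nra.
    - apply (Ck_ext _ (fun s => RInt X s0 (0 + s))). apply filter_forall; intros; rewrite Rplus_0_l; auto.
      apply A. lra. }
  apply (Ck_ext _ (fun s => NX G t s0 dl s * / NX F t s0 dl s)).
  - apply filter_imp with (2 := Hloc). intros s Hs. destruct (Key s Hs) as [E Pos].
    rewrite E. field. lra.
  - assert (C1 : Ck (S k) (NX G t s0 dl) s0).
    { apply CkN; auto. }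
    assert (C2 : Ck (S k) (NX F t s0 dl) s0).
    { apply CkN; auto. }
    assert (Pos : NX F t s0 dl s0 <> 0).
    { destruct (Key s0 ltac:(rewrite Rminus_diag, Rabs_R0; lra)). lra. }
    exact (Ck_mult (S k) _ _ s0 C1 (Ck_inv (S k) _ s0 C2 Pos)).
Qed.

Lemma smooth_all J t F G P (H : Hyp J t F G P) :
  forall s, J s -> Sm P s /\ Sm F s /\ Sm G s.
Proof.
  assert (A : forall k s, J s -> Ck k P s).
  { induction k as [|k IH]; intros s Hs.
    - apply (h_cont _ _ _ _ _ H); auto.
    - apply (step_P _ _ _ _ _ H k); auto.
      apply (step_F _ _ _ _ _ H k); auto.
      apply (step_G _ _ _ _ _ H k); auto. apply (step_F _ _ _ _ _ H k); auto. }
  intros s Hs.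
  assert (BF : forall k s, J s -> Ck k F s) by (intros k; apply (step_F _ _ _ _ _ H k); intros; apply A; auto).
  assert (BG : forall k s, J s -> Ck k G s) by (intros k; apply (step_G _ _ _ _ _ H k); intros; [apply A | apply BF]; auto).
  split; [|split]; intros k; auto.
Qed.

Lemma Dk_lin2 n (X : R -> R) (t s : R) : Sm X s ->
  Dk n (fun d => t * X ((1 - t) * d + s) + (1 - t) * X ((- t) * d + s)) 0
  = (t * (1 - t) ^ n + (1 - t) * (- t) ^ n) * Dk n X s.
Proof.
  intros Hs.
  assert (S1 : Sm (fun d => X ((1 - t) * d + s)) 0) by (apply Sm_aff; rewrite Rmult_0_r, Rplus_0_l; auto).
  assert (S2 : Sm (fun d => X ((- t) * d + s)) 0) by (apply Sm_aff; rewrite Rmult_0_r, Rplus_0_l; auto).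
  rewrite Dk_plus by (apply Sm_scal; auto).
  rewrite !Dk_scal. rewrite !Dk_aff by (rewrite Rmult_0_r, Rplus_0_l; auto).
  rewrite !Rmult_0_r, !Rplus_0_l. ring.
Qed.

Lemma taylor J t F G P (H : Hyp J t F G P) n s : J s ->
  (t * (1 - t) ^ n + (1 - t) * (- t) ^ n) * (G s * Dk n F s - F s * Dk n G s) = 0.
Proof.
  intros Hs. destruct (smooth_all _ _ _ _ _ H s Hs) as [SP [SF SG]].
  pose proof (h_t _ _ _ _ _ H) as Ht.
  set (T := fun d => G s * (t * F ((1 - t) * d + s) + (1 - t) * F ((- t) * d + s)) +
                     (- F s) * (t * G ((1 - t) * d + s) + (1 - t) * G ((- t) * d + s))).
  assert (HT0 : Dk n T 0 = 0).
  { transitivity (Dk n (fun _ => 0) 0); [| apply Dk_zero]. apply Dk_ext.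
    destruct (h_open _ _ _ _ _ H s Hs) as [r [Hr Hy]].
    exists (mkposreal r Hr). intros d Hd. unfold ball in Hd; simpl in Hd.
    unfold AbsRing_ball, abs, minus, plus, opp in Hd; simpl in Hd. rewrite Ropp_0, Rplus_0_r in Hd.
    assert (A : J ((1 - t) * d + s)).
    { apply Hy. replace ((1 - t) * d + s - s) with ((1 - t) * d) by ring. rewrite Rabs_mult.
      rewrite (Rabs_right (1 - t)) by lra. nra. }
    assert (B : J ((- t) * d + s)).
    { apply Hy. replace ((- t) * d + s - s) with ((- t) * d) by ring. rewrite Rabs_mult.
      rewrite Rabs_Ropp, (Rabs_right t) by lra. nra. }
    unfold T. rewrite (h_eq _ _ _ _ _ H _ _ A B).
    replace (t * ((1 - t) * d + s) + (1 - t) * (- t * d + s)) with s by ring.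
    rewrite (h_G _ _ _ _ _ H s Hs). ring. }
  unfold T in HT0.
  rewrite Dk_plus in HT0.
  - rewrite !Dk_scal in HT0. rewrite !Dk_lin2 in HT0 by auto. rewrite <- HT0. ring.
  - apply Sm_scal. apply Sm_plus; apply Sm_scal; apply Sm_aff; rewrite Rmult_0_r, Rplus_0_l; auto.
  - apply Sm_scal. apply Sm_plus; apply Sm_scal; apply Sm_aff; rewrite Rmult_0_r, Rplus_0_l; auto.
Qed.

Lemma isd_mult (f g : R -> R) (x df dg : R) : is_derive f x df -> is_derive g x dg ->
  is_derive (fun y => f y * g y) x (df * g x + f x * dg).
Proof. intros A B. apply (@is_derive_mult R_AbsRing f g x df dg A B). intros; apply Rmult_comm. Qed.

Lemma isd_minus (f g : R -> R) (x df dg : R) : is_derive f x df -> is_derive g x dg ->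
  is_derive (fun y => f y - g y) x (df - dg).
Proof. intros A B. apply (@is_derive_minus R_AbsRing R_NormedModule f g x df dg A B). Qed.

Lemma isd_plus (f g : R -> R) (x df dg : R) : is_derive f x df -> is_derive g x dg ->
  is_derive (fun y => f y + g y) x (df + dg).
Proof. intros A B. apply (@is_derive_plus R_AbsRing R_NormedModule f g x df dg A B). Qed.

Lemma isd_val (f : R -> R) (x l l' : R) : is_derive f x l -> l = l' -> is_derive f x l'.
Proof. intros A ->; auto. Qed.

Lemma Sm_mult f g x : Sm f x -> Sm g x -> Sm (fun y => f y * g y) x.
Proof. intros A B k; apply Ck_mult; auto. Qed.
Lemma Sm_inv f x : Sm f x -> f x <> 0 -> Sm (fun y => / f y) x.
Proof. intros A B k; apply Ck_inv; auto. Qed.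

Lemma Sm_isd f x : Sm f x -> is_derive f x (Derive f x).
Proof. intros A. apply Derive_correct. exact (locally_singleton _ _ (Sm_locex _ _ A)). Qed.

Lemma mvt_J (J : R -> Prop) (f df : R -> R) a b :
  (forall u v w, J u -> J v -> u <= w <= v -> J w) ->
  (forall x, J x -> is_derive f x (df x)) -> J a -> J b ->
  exists c, J c /\ f b - f a = df c * (b - a).
Proof.
  intros Hc Hd Ha Hb.
  assert (Hin : forall x, Rmin a b <= x <= Rmax a b -> J x).
  { intros x Hx. destruct (Rle_dec a b).
    - rewrite Rmin_left in Hx by lra. rewrite Rmax_right in Hx by lra. apply (Hc a b); auto.
    - rewrite Rmin_right in Hx by lra. rewrite Rmax_left in Hx by lra. apply (Hc b a); auto. }
  destruct (MVT_gen f a b df) as [c [Hc1 Hc2]].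
  - intros x Hx. apply Hd, Hin. lra.
  - intros x Hx. apply derivable_continuous_pt, ex_derive_Reals_0. eexists. apply Hd, Hin; auto.
  - exists c. split; auto.
Qed.

Lemma const_J (J : R -> Prop) (f : R -> R) a b :
  (forall u v w, J u -> J v -> u <= w <= v -> J w) ->
  (forall x, J x -> is_derive f x 0) -> J a -> J b -> f a = f b.
Proof.
  intros Hc Hd Ha Hb. destruct (mvt_J J f (fun _ => 0) a b Hc Hd Ha Hb) as [c [_ E]]. lra.
Qed.



Lemma ode_p J t F G P (H : Hyp J t F G P) s0 : J s0 ->
  exists p, (t - 1/2) * p = 0 /\ forall s, J s -> Dk 2 F s = p * F s /\ Dk 2 G s = p * G s.
Proof.
  intros Hs0. pose proof (h_t _ _ _ _ _ H) as Ht.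
  pose proof (smooth_all _ _ _ _ _ H) as SM.
  pose proof (h_conv _ _ _ _ _ H) as Hconv.
  set (q := fun y => Dk 2 F y * / F y).
  assert (Fpos := h_F _ _ _ _ _ H).
  assert (e2 : forall s, J s -> Dk 2 F s = q s * F s /\ Dk 2 G s = q s * G s).
  { intros s Hs. pose proof (taylor _ _ _ _ _ H 2 s Hs) as T. simpl in T.
    assert (c2 : t * ((1 - t) * ((1 - t) * 1)) + (1 - t) * (- t * (- t * 1)) <> 0) by nra.
    apply (Rmult_integral) in T. destruct T as [T|T]; [contradiction|].
    pose proof (Fpos s Hs). unfold q. simpl. split. field. lra.
    apply (Rmult_eq_reg_l (F s)); [|lra]. field_simplify; [|lra]. simpl in T. nra. }
  set (W := fun y => F y * Derive G y - Derive F y * G y).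
  assert (Wd : forall s, J s -> is_derive W s 0).
  { intros s Hs. destruct (SM s Hs) as [_ [SF SG]]. unfold W.
    apply isd_val with (l := (Derive F s * Derive G s + F s * Derive (Derive G) s) -
                              (Derive (Derive F) s * G s + Derive F s * Derive G s)).
    apply isd_minus; apply isd_mult; apply Sm_isd; auto; apply Sm_D; auto.
    destruct (e2 s Hs) as [A B]. simpl in A, B. rewrite A, B. ring. }
  assert (Wnz : forall s, J s -> W s <> 0).
  { intros s Hs E.
    assert (W0 : forall y, J y -> W y = 0).
    { intros y Hy. rewrite <- E. apply (const_J J W); auto. }
    assert (Pd : forall y, J y -> is_derive P y 0).
    { intros y Hy. destruct (SM y Hy) as [_ [SF SG]].
      apply (is_derive_ext_loc (fun z => G z * / F z)).
      - apply filter_imp with (2 := locally_J _ _ _ _ _ H y Hy). intros z Hz.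
        cbv beta. rewrite (h_G _ _ _ _ _ H z Hz). pose proof (Fpos z Hz). assert (K : P z * F z * / F z = P z) by (field; lra). exact K.
      - pose proof (Fpos y Hy).
        eapply isd_val.
        { apply isd_mult. apply Sm_isd; exact SG. apply (is_derive_inv F y (Derive F y)); [apply Sm_isd; exact SF | lra]. }
        pose proof (W0 y Hy) as Wy. unfold W in Wy.
        assert (K : Derive G y * / F y + G y * (- Derive F y / F y ^ 2) = (F y * Derive G y - Derive F y * G y) / F y ^ 2) by (field; lra).
        cbv beta. rewrite K, Wy. unfold Rdiv; ring. }
    destruct (h_open _ _ _ _ _ H s Hs) as [r [Hr Hy]].
    assert (Hv : J (s + r / 2)) by (apply Hy; rewrite Rabs_right; lra).
    assert (P s = P (s + r / 2)) by (apply (const_J J P); auto).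
    assert (s = s + r / 2) by (apply (h_inj _ _ _ _ _ H); auto). lra. }
  assert (Sq : forall s, J s -> Sm q s).
  { intros s Hs. destruct (SM s Hs) as [_ [SF SG]]. unfold q. apply Sm_mult.
    apply Sm_D, Sm_D; auto. apply Sm_inv; auto. pose proof (Fpos s Hs); lra. }
  assert (e3 : forall X, (forall s, J s -> Sm X s) -> (forall s, J s -> Dk 2 X s = q s * X s) ->
            forall s, J s -> Dk 3 X s = Derive q s * X s + q s * Derive X s).
  { intros X SX EX s Hs. change (Derive (Dk 2 X) s = Derive q s * X s + q s * Derive X s).
    rewrite (Derive_ext_loc _ (fun y => q y * X y)).
    - apply is_derive_unique. apply isd_mult; apply Sm_isd; auto.
    - apply filter_imp with (2 := locally_J _ _ _ _ _ H s Hs). intros y Hy. auto. }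
  assert (e4 : forall X, (forall s, J s -> Sm X s) -> (forall s, J s -> Dk 2 X s = q s * X s) ->
            forall s, J s -> Dk 4 X s = Derive (Derive q) s * X s + 2 * Derive q s * Derive X s + q s * Dk 2 X s).
  { intros X SX EX s Hs. change (Derive (Dk 3 X) s = Derive (Derive q) s * X s + 2 * Derive q s * Derive X s + q s * Dk 2 X s).
    rewrite (Derive_ext_loc _ (fun y => Derive q y * X y + q y * Derive X y)).
    - apply is_derive_unique.
      apply isd_val with (l := (Derive (Derive q) s * X s + Derive q s * Derive X s) +
                               (Derive q s * Derive X s + q s * Derive (Derive X) s)).
      apply isd_plus; apply isd_mult; apply Sm_isd; auto; apply Sm_D; auto.
      simpl. ring.
    - apply filter_imp with (2 := locally_J _ _ _ _ _ H s Hs). intros y Hy. first [apply e3; auto | symmetry; apply e3; auto]. }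
  assert (SF : forall s, J s -> Sm F s) by (intros s Hs; apply (SM s Hs)).
  assert (SG : forall s, J s -> Sm G s) by (intros s Hs; apply (SM s Hs)).
  assert (EF : forall s, J s -> Dk 2 F s = q s * F s) by (intros s Hs; apply (e2 s Hs)).
  assert (EG : forall s, J s -> Dk 2 G s = q s * G s) by (intros s Hs; apply (e2 s Hs)).
  destruct (Req_dec t (1/2)) as [Th|Th].
  -
    assert (q1 : forall s, J s -> is_derive q s 0).
    { intros s Hs. pose proof (taylor _ _ _ _ _ H 4 s Hs) as T.
      rewrite (e4 F SF EF s Hs), (e4 G SG EG s Hs) in T. rewrite EF, EG in T by auto.
      assert (c4 : t * (1 - t) ^ 4 + (1 - t) * (- t) ^ 4 <> 0) by (rewrite Th; simpl; lra).
      apply Rmult_integral in T. destruct T as [T|T]; [contradiction|].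
      apply isd_val with (l := Derive q s). apply Sm_isd; auto.
      pose proof (Wnz s Hs) as Wn. unfold W in Wn.
      apply (Rmult_eq_reg_l (-2 * (F s * Derive G s - Derive F s * G s))); [|intros E; apply Wn; lra].
      rewrite Rmult_0_r. rewrite <- T. ring. }
    exists (q s0). split. rewrite Th; ring.
    intros s Hs. rewrite EF, EG by auto. rewrite (const_J J q s s0); auto.
  - exists 0. split. ring.
    assert (q0 : forall s, J s -> q s = 0).
    { intros s Hs. pose proof (taylor _ _ _ _ _ H 3 s Hs) as T.
      rewrite (e3 F SF EF s Hs), (e3 G SG EG s Hs) in T by auto.
      assert (c3 : t * (1 - t) ^ 3 + (1 - t) * (- t) ^ 3 <> 0).
      { replace (t * (1 - t) ^ 3 + (1 - t) * (- t) ^ 3) with (t * (1 - t) * (1 - 2 * t)) by ring.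
        intros E. apply Rmult_integral in E. destruct E as [E|E]; [nra|lra]. }
      apply Rmult_integral in T. destruct T as [T|T]; [contradiction|].
      pose proof (Wnz s Hs) as Wn. unfold W in Wn.
      apply (Rmult_eq_reg_l (-1 * (F s * Derive G s - Derive F s * G s))); [|intros E; apply Wn; lra].
      rewrite Rmult_0_r. rewrite <- T. ring. }
    intros s Hs. rewrite EF, EG, q0 by auto. split; ring.
Qed.

Definition kap (p : R) : R :=
  match total_order_T p 0 with
  | inleft (left _) => sqrt (- p)
  | inleft (right _) => 1
  | inright _ => sqrt p
  end.

Definition sig (p : R) : R :=
  match total_order_T p 0 with
  | inleft (left _) => - sqrt (- p)
  | inleft (right _) => 0
  | inright _ => sqrt p
  end.

Lemma cosh2_sinh2 x : cosh x * cosh x - sinh x * sinh x = 1.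
Proof.
  unfold cosh, sinh. assert (E : exp x * exp (- x) = 1).
  { rewrite <- exp_plus. replace (x + - x) with 0 by ring. apply exp_0. }
  rewrite <- E. field.
Qed.

Lemma Sp_d p x : is_derive (Sp p) x (kap p * Cp p x).
Proof.
  unfold Sp, Cp, kap. destruct (total_order_T p 0) as [[H|H]|H].
  - auto_derive; auto. ring.
  - auto_derive; auto. ring.
  - unfold sinh, cosh. auto_derive; auto. field.
Qed.

Lemma Cp_d p x : is_derive (Cp p) x (sig p * Sp p x).
Proof.
  unfold Sp, Cp, sig. destruct (total_order_T p 0) as [[H|H]|H].
  - auto_derive; auto. ring.
  - auto_derive; auto. ring.
  - unfold sinh, cosh. auto_derive; auto. field.
Qed.

Lemma kap_sig p : kap p * sig p = p.
Proof.
  unfold kap, sig. destruct (total_order_T p 0) as [[H|H]|H].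
  - replace (sqrt (- p) * - sqrt (- p)) with (- (sqrt (- p) * sqrt (- p))) by ring.
    rewrite sqrt_sqrt; lra.
  - lra.
  - rewrite sqrt_sqrt; lra.
Qed.

Lemma kap_pos p : 0 < kap p.
Proof.
  unfold kap. destruct (total_order_T p 0) as [[H|H]|H].
  - apply sqrt_lt_R0; lra.
  - lra.
  - apply sqrt_lt_R0; lra.
Qed.

Lemma SC_id p x : sig p * (Sp p x * Sp p x) - kap p * (Cp p x * Cp p x) = - kap p.
Proof.
  unfold kap, sig, Sp, Cp. destruct (total_order_T p 0) as [[H|H]|H].
  - pose proof (sin2_cos2 (sqrt (- p) * x)) as E. unfold Rsqr in E.
    replace (- sqrt (- p) * (sin (sqrt (- p) * x) * sin (sqrt (- p) * x)) -
             sqrt (- p) * (cos (sqrt (- p) * x) * cos (sqrt (- p) * x)))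
      with (- sqrt (- p) * (sin (sqrt (- p) * x) * sin (sqrt (- p) * x) + cos (sqrt (- p) * x) * cos (sqrt (- p) * x))) by ring.
    rewrite E. ring.
  - ring.
  - pose proof (cosh2_sinh2 (sqrt p * x)) as E.
    replace (sqrt p * (sinh (sqrt p * x) * sinh (sqrt p * x)) - sqrt p * (cosh (sqrt p * x) * cosh (sqrt p * x)))
      with (- sqrt p * (cosh (sqrt p * x) * cosh (sqrt p * x) - sinh (sqrt p * x) * sinh (sqrt p * x))) by ring.
    rewrite E. ring.
Qed.

Lemma ode_uniq (J : R -> Prop) (U U1 : R -> R) p s0 :
  (forall u v w, J u -> J v -> u <= w <= v -> J w) ->
  (forall x, J x -> is_derive U x (U1 x)) -> (forall x, J x -> is_derive U1 x (p * U x)) ->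
  J s0 -> U s0 = 0 -> U1 s0 = 0 -> forall x, J x -> U x = 0.
Proof.
  intros Hc HU HU1 Hs0 E0 E1 x Hx.
  set (c := Rabs (p + 1)).
  set (E := fun y => U1 y * U1 y + U y * U y).
  assert (Ed : forall y, J y -> is_derive E y (2 * (p + 1) * U y * U1 y)).
  { intros y Hy. unfold E. eapply isd_val. apply isd_plus; apply isd_mult; auto. ring. }
  assert (Bd : forall y, J y -> Rabs (2 * (p + 1) * U y * U1 y) <= c * E y).
  { intros y Hy. unfold c, E. set (a := U y). set (b := U1 y).
    replace (2 * (p + 1) * a * b) with ((p + 1) * (2 * a * b)) by ring.
    rewrite Rabs_mult. apply Rmult_le_compat_l. apply Rabs_pos.
    apply Rabs_le. pose proof (Rle_0_sqr (a - b)); pose proof (Rle_0_sqr (a + b)); unfold Rsqr in *; split; nra. }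
  assert (Epos : 0 <= E x) by (unfold E; nra).
  assert (E0' : E s0 = 0) by (unfold E; rewrite E0, E1; ring).
  assert (Ex0 : E x <= 0).
  { destruct (Rle_dec s0 x) as [Hle|Hle].
    - set (g := fun y => E y * exp (- c * y)).
      assert (gd : forall y, J y -> is_derive g y ((2 * (p + 1) * U y * U1 y - c * E y) * exp (- c * y))).
      { intros y Hy. unfold g. eapply isd_val. apply isd_mult. apply Ed; auto.
        assert (K : is_derive (fun y => exp (- c * y)) y (- c * exp (- c * y))) by (auto_derive; auto; ring).
        exact K. cbv beta. ring. }
      destruct (mvt_J J g _ s0 x Hc gd Hs0 Hx) as [xi [Hxi Exi]].
      assert ((2 * (p + 1) * U xi * U1 xi - c * E xi) <= 0).
      { pose proof (Bd xi Hxi) as B1. pose proof (Rle_abs (2 * (p + 1) * U xi * U1 xi)) as B2.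
        pose proof (Rle_abs (- (2 * (p + 1) * U xi * U1 xi))) as B3. rewrite Rabs_Ropp in B3. lra. }
      assert (0 < exp (- c * xi)) by apply exp_pos.
      assert (g x - g s0 <= 0).
      { rewrite Exi. apply Rmult_le_0_r; [|lra]. apply Rmult_le_0_r; lra. }
      unfold g in H1. rewrite E0' in H1. assert (0 < exp (- c * x)) by apply exp_pos. nra.
    - set (g := fun y => E y * exp (c * y)).
      assert (gd : forall y, J y -> is_derive g y ((2 * (p + 1) * U y * U1 y + c * E y) * exp (c * y))).
      { intros y Hy. unfold g. eapply isd_val. apply isd_mult. apply Ed; auto.
        assert (K : is_derive (fun y => exp (c * y)) y (c * exp (c * y))) by (auto_derive; auto; ring).
        exact K. cbv beta. ring. }
      destruct (mvt_J J g _ x s0 Hc gd Hx Hs0) as [xi [Hxi Exi]].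
      assert (0 <= (2 * (p + 1) * U xi * U1 xi + c * E xi)).
      { pose proof (Bd xi Hxi) as B1. pose proof (Rle_abs (2 * (p + 1) * U xi * U1 xi)) as B2.
        pose proof (Rle_abs (- (2 * (p + 1) * U xi * U1 xi))) as B3. rewrite Rabs_Ropp in B3. lra. }
      assert (0 < exp (c * xi)) by apply exp_pos.
      assert (0 <= g s0 - g x).
      { rewrite Exi. apply Rmult_le_pos; [|lra]. apply Rmult_le_pos; lra. }
      unfold g in H1. rewrite E0' in H1. assert (0 < exp (c * x)) by apply exp_pos. nra. }
  unfold E in Ex0, Epos. nra.
Qed.

Lemma ode_sol (J : R -> Prop) (X : R -> R) p s0 :
  (forall u v w, J u -> J v -> u <= w <= v -> J w) -> J s0 ->
  (forall s, J s -> Sm X s) -> (forall s, J s -> Dk 2 X s = p * X s) ->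
  exists al be, forall s, J s -> X s = al * Sp p s + be * Cp p s.
Proof.
  intros Hc Hs0 SX EX.
  set (S0 := Sp p s0). set (C0 := Cp p s0). set (k := kap p). set (sg := sig p).
  set (X0 := X s0). set (X1 := Derive X s0).
  set (D := sg * (S0 * S0) - k * (C0 * C0)).
  assert (HD : D <> 0) by (unfold D, S0, C0, k, sg; rewrite SC_id; pose proof (kap_pos p); lra).
  set (al := (X0 * sg * S0 - C0 * X1) / D). set (be := (S0 * X1 - k * C0 * X0) / D).
  exists al, be. intros s Hs.
  assert (Hks : k * sg = p) by apply kap_sig.
  assert (U0 : forall y, J y -> X y - al * Sp p y - be * Cp p y = 0).
  { apply (ode_uniq J (fun y => X y - al * Sp p y - be * Cp p y)
                      (fun y => Derive X y - al * k * Cp p y - be * sg * Sp p y) p s0); auto.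
    - intros y Hy. eapply isd_val.
      apply isd_minus. apply isd_minus. apply Sm_isd; auto.
      apply is_derive_scal. apply Sp_d. apply is_derive_scal. apply Cp_d.
      fold k sg. ring.
    - intros y Hy. eapply isd_val.
      apply isd_minus. apply isd_minus. apply Sm_isd; auto. apply Sm_D; auto.
      apply is_derive_scal. apply Cp_d. apply is_derive_scal. apply Sp_d.
      fold k sg. change (Derive (Derive X) y) with (Dk 2 X y). rewrite EX by auto.
      rewrite <- Hks. ring.
    - fold S0 C0 X0. unfold al, be. unfold D in *. field. auto.
    - fold S0 C0 X1. unfold al, be. unfold D in *. field. auto. }
  pose proof (U0 s Hs). lra.
Qed.

Lemma core J t F G P (H : Hyp J t F G P) s0 : J s0 ->
  exists p, (t - 1/2) * p = 0 /\ exists a1 b1 a2 b2, a1 * b2 - a2 * b1 <> 0 /\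
    forall s, J s -> F s = a1 * Sp p s + b1 * Cp p s /\ G s = a2 * Sp p s + b2 * Cp p s.
Proof.
  intros Hs0. destruct (ode_p _ _ _ _ _ H s0 Hs0) as [p [Hp E]].
  pose proof (smooth_all _ _ _ _ _ H) as SM.
  pose proof (h_conv _ _ _ _ _ H) as Hc.
  destruct (ode_sol J F p s0 Hc Hs0) as [a1 [b1 HF]].
  { intros s Hs; apply (SM s Hs). } { intros s Hs; apply (E s Hs). }
  destruct (ode_sol J G p s0 Hc Hs0) as [a2 [b2 HG]].
  { intros s Hs; apply (SM s Hs). } { intros s Hs; apply (E s Hs). }
  exists p. split; auto. exists a1, b1, a2, b2. split; [|intros; split; auto].
  intros Hd.
  destruct (h_open _ _ _ _ _ H s0 Hs0) as [r [Hr Hy]].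
  set (s1 := s0 + r / 2).
  assert (Hs1 : J s1) by (apply Hy; unfold s1; rewrite Rabs_right; lra).
  assert (K : forall s, J s -> b2 * F s = b1 * G s /\ a2 * F s = a1 * G s).
  { intros s Hs. rewrite (HF s Hs), (HG s Hs). set (S := Sp p s). set (C := Cp p s). split.
    - replace (b2 * (a1 * S + b1 * C)) with ((a1 * b2 - a2 * b1) * S + b1 * (a2 * S + b2 * C)) by ring.
      rewrite Hd; ring.
    - replace (a2 * (a1 * S + b1 * C)) with (- (a1 * b2 - a2 * b1) * C + a1 * (a2 * S + b2 * C)) by ring.
      rewrite Hd; ring. }
  assert (F0 := h_F _ _ _ _ _ H s0 Hs0). assert (F1 := h_F _ _ _ _ _ H s1 Hs1).
  assert (Eq : G s0 * F s1 = G s1 * F s0).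
  { destruct (K s0 Hs0) as [A0 B0]. destruct (K s1 Hs1) as [A1 B1].
    destruct (Req_dec a1 0) as [Ha|Ha].
    - destruct (Req_dec b1 0) as [Hb|Hb].
      + exfalso. rewrite (HF s0 Hs0), Ha, Hb in F0. lra.
      + apply (Rmult_eq_reg_l b1); auto. nra.
    - apply (Rmult_eq_reg_l a1); auto. nra. }
  assert (P s0 = P s1).
  { rewrite (h_G _ _ _ _ _ H s0 Hs0), (h_G _ _ _ _ _ H s1 Hs1) in Eq.
    apply (Rmult_eq_reg_r (F s0 * F s1)). nra. nra. }
  assert (s0 = s1) by (apply (h_inj _ _ _ _ _ H); auto). unfold s1 in H1. lra.
Qed.

Lemma sinh_sub x y : sinh x * cosh y - cosh x * sinh y = sinh (x - y).
Proof.
  unfold sinh, cosh. unfold Rminus. rewrite exp_plus.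
  replace (- (x + - y)) with (- x + y) by ring. rewrite exp_plus.
  assert (E1 : exp y * exp (- y) = 1) by (rewrite <- exp_plus; replace (y + - y) with 0 by ring; apply exp_0).
  assert (E2 : exp x * exp (- x) = 1) by (rewrite <- exp_plus; replace (x + - x) with 0 by ring; apply exp_0).
  field_simplify. 
  replace (exp x * exp y - exp x * exp (- y) + exp (- x) * exp y - exp (- x) * exp (- y) -
      (exp x * exp y + exp x * exp (- y) - exp (- x) * exp y - exp (- x) * exp (- y)))
    with (2 * (exp (- x) * exp y - exp x * exp (- y))) by ring.
  field.
Qed.

Lemma Sp_sub p u v : Sp p u * Cp p v - Cp p u * Sp p v = Sp p (u - v).
Proof.
  unfold Sp, Cp. destruct (total_order_T p 0) as [[H|H]|H].
  - rewrite Rmult_minus_distr_l, sin_minus. ring.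
  - ring.
  - rewrite Rmult_minus_distr_l, <- sinh_sub. ring.
Qed.

Lemma Sp_odd p u : Sp p (- u) = - Sp p u.
Proof.
  unfold Sp. destruct (total_order_T p 0) as [[H|H]|H].
  - rewrite <- sin_neg. f_equal. ring.
  - ring.
  - replace (sqrt p * - u) with (- (sqrt p * u)) by ring. unfold sinh.
    rewrite Ropp_involutive. field.
Qed.

Lemma Sp_zero u : Sp 0 u = u.
Proof.
  unfold Sp. destruct (total_order_T 0 0) as [[H|H]|H]; auto; lra.
Qed.

Lemma I_conv (a b : Rbar) x y z : in_I a b x -> in_I a b y -> x <= z <= y -> in_I a b z.
Proof.
  intros [Hx1 Hx2] [Hy1 Hy2] Hz. split.
  - apply Rbar_lt_le_trans with x; auto. simpl; lra.
  - apply Rbar_le_lt_trans with y; auto. simpl; lra.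
Qed.

Lemma I_open (a b : Rbar) x : in_I a b x -> exists e, 0 < e /\ forall y, Rabs (y - x) < e -> in_I a b y.
Proof.
  intros [Ha Hb].
  assert (A : exists e1, 0 < e1 /\ forall y, x - e1 < y -> Rbar_lt a y).
  { destruct a as [a0| |]; simpl in Ha.
    - exists (x - a0). split. lra. intros y Hy; simpl; lra.
    - contradiction.
    - exists 1. split. lra. intros; simpl; auto. }
  assert (B : exists e2, 0 < e2 /\ forall y, y < x + e2 -> Rbar_lt y b).
  { destruct b as [b0| |]; simpl in Hb.
    - exists (b0 - x). split. lra. intros y Hy; simpl; lra.
    - exists 1. split. lra. intros; simpl; auto.
    - contradiction. }
  destruct A as [e1 [He1 A]], B as [e2 [He2 B]].
  exists (Rmin e1 e2). split. apply Rmin_pos; auto.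
  intros y Hy. apply Rabs_def2 in Hy. pose proof (Rmin_l e1 e2). pose proof (Rmin_r e1 e2).
  split; [apply A | apply B]; lra.
Qed.

Lemma I_ne (a b : Rbar) : Rbar_lt a b -> exists x, in_I a b x.
Proof.
  intros H. unfold in_I.
  destruct a as [a0| |]; destruct b as [b0| |]; simpl in H; try contradiction.
  - exists ((a0 + b0) / 2). simpl. split; lra.
  - exists (a0 + 1). simpl. split; auto; lra.
  - exists (b0 - 1). simpl. split; auto; lra.
  - exists 0. simpl. split; auto.
Qed.

Lemma ivt_seg (phi : R -> R) x y w : (forall z, x <= z <= y -> continuity_pt phi z) -> x <= y ->
  Rmin (phi x) (phi y) <= w <= Rmax (phi x) (phi y) -> exists z, x <= z <= y /\ phi z = w.
Proof.
  intros Hc Hxy Hw.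
  destruct (Req_dec (phi x) w) as [E|E]. exists x. split; auto; lra.
  destruct (Req_dec (phi y) w) as [E'|E']. exists y. split; auto; lra.
  destruct (Req_dec x y) as [Exy|Exy]. { subst. rewrite Rmin_left, Rmax_left in Hw by lra. lra. }
  destruct (Rle_dec (phi x) (phi y)) as [Hl|Hl].
  - rewrite Rmin_left, Rmax_right in Hw by lra.
    destruct (Ranalysis5.IVT_interv (fun z => phi z - w) x y) as [z [Hz Ez]].
    + intros z Hz. apply continuity_pt_minus. apply Hc; auto. apply continuity_pt_const. intros u v; auto.
    + lra.
    + lra.
    + lra.
    + exists z. split; auto. lra.
  - rewrite Rmin_right, Rmax_left in Hw by lra.
    destruct (Ranalysis5.IVT_interv (fun z => w - phi z) x y) as [z [Hz Ez]].
    + intros z Hz. apply continuity_pt_minus. apply continuity_pt_const. intros u v; auto. apply Hc; auto.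
    + lra.
    + lra.
    + lra.
    + exists z. split; auto. lra.
Qed.

Lemma ivt_I (a b : Rbar) (phi : R -> R) x y w : (forall z, in_I a b z -> continuity_pt phi z) ->
  in_I a b x -> in_I a b y ->
  Rmin (phi x) (phi y) <= w <= Rmax (phi x) (phi y) ->
  exists z, in_I a b z /\ Rmin x y <= z <= Rmax x y /\ phi z = w.
Proof.
  intros Hc Hx Hy Hw. destruct (Rle_dec x y) as [Hl|Hl].
  - destruct (ivt_seg phi x y w) as [z [Hz Ez]]; auto.
    + intros z Hz. apply Hc. apply (I_conv a b x y); auto.
    + exists z. rewrite Rmin_left, Rmax_right by lra. split; auto. apply (I_conv a b x y); auto.
  - rewrite Rmin_comm, Rmax_comm in Hw.
    destruct (ivt_seg phi y x w) as [z [Hz Ez]]; auto; try lra.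
    + intros z Hz. apply Hc. apply (I_conv a b y x); auto.
    + exists z. rewrite Rmin_right, Rmax_left by lra. split; auto. apply (I_conv a b y x); auto.
Qed.

Lemma smono_inj (I : R -> Prop) (phi : R -> R) : strict_mono_on I phi ->
  forall x y, I x -> I y -> phi x = phi y -> x = y.
Proof.
  intros [H|H] x y Hx Hy E; destruct (Rtotal_order x y) as [L|[L|L]]; auto;
  [pose proof (H x y Hx Hy L) | pose proof (H y x Hy Hx L) | pose proof (H x y Hx Hy L) | pose proof (H y x Hy Hx L)]; lra.
Qed.

Lemma inv_on_unique (I : R -> Prop) (phi : R -> R) w z :
  (forall x y, I x -> I y -> phi x = phi y -> x = y) -> I z -> phi z = w -> inv_on I phi w = z.
Proof.
  intros Hinj Hz Ez. unfold inv_on.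
  destruct (epsilon_spec (inhabits 0) (fun z => I z /\ phi z = w)) as [A B].
  exists z; auto.
  apply Hinj; auto. congruence.
Qed.

Lemma inv_on_spec (I : R -> Prop) (phi : R -> R) w :
  (exists z, I z /\ phi z = w) -> I (inv_on I phi w) /\ phi (inv_on I phi w) = w.
Proof.
  intros H. unfold inv_on. apply (epsilon_spec (inhabits 0) (fun z => I z /\ phi z = w)). auto.
Qed.

Lemma hinv_local (a b : Rbar) (h : R -> R) x0 :
  continuous_on_set (in_I a b) h -> strict_mono_on (in_I a b) h -> in_I a b x0 ->
  forall eps, 0 < eps -> exists r, 0 < r /\ forall y, Rabs (y - h x0) < r ->
    (exists z, in_I a b z /\ h z = y) /\ Rabs (inv_on (in_I a b) h y - x0) <= eps.
Proof.
  intros Hc Hm Hx0 eps Heps.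
  destruct (I_open a b x0 Hx0) as [e0 [He0 HI]].
  set (e1 := Rmin eps (e0 / 2)).
  assert (He1 : 0 < e1) by (apply Rmin_pos; lra).
  assert (He1e : e1 <= eps) by apply Rmin_l.
  assert (He1e0 : e1 <= e0 / 2) by apply Rmin_r.
  set (xl := x0 - e1). set (xr := x0 + e1).
  assert (Hxl : in_I a b xl) by (apply HI; unfold xl; rewrite Rabs_left; lra).
  assert (Hxr : in_I a b xr) by (apply HI; unfold xr; rewrite Rabs_right; lra).
  set (m := Rmin (h xl) (h xr)). set (M := Rmax (h xl) (h xr)).
  assert (HmM : m < h x0 < M).
  { unfold m, M. destruct Hm as [Hm|Hm].
    - pose proof (Hm xl x0 Hxl Hx0 ltac:(unfold xl; lra)). pose proof (Hm x0 xr Hx0 Hxr ltac:(unfold xr; lra)).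
      rewrite Rmin_left, Rmax_right by lra. lra.
    - pose proof (Hm xl x0 Hxl Hx0 ltac:(unfold xl; lra)). pose proof (Hm x0 xr Hx0 Hxr ltac:(unfold xr; lra)).
      rewrite Rmin_right, Rmax_left by lra. lra. }
  exists (Rmin (h x0 - m) (M - h x0)). split. apply Rmin_pos; lra.
  intros y Hy. apply Rabs_def2 in Hy.
  pose proof (Rmin_l (h x0 - m) (M - h x0)). pose proof (Rmin_r (h x0 - m) (M - h x0)).
  destruct (ivt_I a b h xl xr y Hc Hxl Hxr) as [z [Hz [Hz2 Ez]]].
  { fold m M. lra. }
  split. exists z; auto.
  rewrite (inv_on_unique (in_I a b) h y z); auto.
  - rewrite Rmin_left, Rmax_right in Hz2 by (unfold xl, xr; lra).
    unfold xl, xr in Hz2. apply Rabs_le. lra.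
  - apply smono_inj; auto.
Qed.

Definition Jset (a b : Rbar) (h : R -> R) (s : R) : Prop := exists x, in_I a b x /\ h x = s.

Lemma build_hyp (a b : Rbar) (t : R) (f g h : R -> R) :
  0 < t < 1 ->
  (forall x, in_I a b x -> 0 < f x) ->
  continuous_on_set (in_I a b) (fun x => g x / f x) ->
  strict_mono_on (in_I a b) (fun x => g x / f x) ->
  continuous_on_set (in_I a b) h ->
  strict_mono_on (in_I a b) h ->
  (forall x y, in_I a b x -> in_I a b y ->
      inv_on (in_I a b) (fun z => g z / f z)
        ((t * g x + (1 - t) * g y) / (t * f x + (1 - t) * f y))
      = inv_on (in_I a b) h (t * h x + (1 - t) * h y)) ->
  Hyp (Jset a b h) t (fun s => f (inv_on (in_I a b) h s)) (fun s => g (inv_on (in_I a b) h s))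
      (fun s => g (inv_on (in_I a b) h s) / f (inv_on (in_I a b) h s)).
Proof.
  intros Ht Hf Hpc Hpm Hhc Hhm Heq.
  set (I := in_I a b). set (hinv := inv_on I h). set (phi := fun x => g x / f x).
  assert (hinj := smono_inj I h Hhm).
  assert (pinj := smono_inj I phi Hpm).
  assert (Hsp : forall s, Jset a b h s -> I (hinv s) /\ h (hinv s) = s).
  { intros s Hs. apply inv_on_spec. exact Hs. }
  assert (Hhh : forall x, I x -> hinv (h x) = x).
  { intros x Hx. apply inv_on_unique; auto. }
  assert (Hconv : forall u v w, Jset a b h u -> Jset a b h v -> u <= w <= v -> Jset a b h w).
  { intros u v w Hu Hv Hw. destruct (Hsp u Hu) as [A1 A2]. destruct (Hsp v Hv) as [B1 B2].
    destruct (ivt_I a b h (hinv u) (hinv v) w Hhc A1 B1) as [z [Hz [_ Ez]]].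
    { rewrite A2, B2. rewrite Rmin_left, Rmax_right by lra. lra. }
    exists z; auto. }
  constructor; auto.
  - intros s Hs. destruct (Hsp s Hs) as [A1 A2].
    destruct (hinv_local a b h (hinv s) Hhc Hhm A1 1 ltac:(lra)) as [r [Hr Hy]].
    exists r. split; auto. intros y Hy'. rewrite <- A2 in Hy'. apply (proj1 (Hy y Hy')).
  - intros s Hs. apply Hf, Hsp; auto.
  - intros s Hs. cbv beta. field. apply Rgt_not_eq, Hf, Hsp; auto.
  - intros s Hs. destruct (Hsp s Hs) as [A1 A2].
    apply (continuity_pt_comp hinv phi s).
    + apply continuity_pt_filterlim. apply filterlim_locally. intros eps.
      destruct (hinv_local a b h (hinv s) Hhc Hhm A1 (eps / 2) ltac:(destruct eps; simpl; lra)) as [r [Hr Hy]].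
      exists (mkposreal r Hr). intros y Hb. unfold ball in Hb; simpl in Hb.
      unfold AbsRing_ball, abs, minus, plus, opp in Hb; simpl in Hb.
      rewrite <- A2 in Hb. destruct (Hy y Hb) as [_ K].
      unfold ball; simpl. unfold AbsRing_ball, abs, minus, plus, opp; simpl.
      fold I hinv in K. unfold Rminus in K. pose proof (cond_pos eps). lra.
    + apply Hpc; auto.
  - intros u v Hu Hv E. destruct (Hsp u Hu) as [A1 A2]. destruct (Hsp v Hv) as [B1 B2].
    rewrite <- A2, <- B2. f_equal. apply pinj; auto.
  - intros u v Hu Hv. destruct (Hsp u Hu) as [A1 A2]. destruct (Hsp v Hv) as [B1 B2].
    set (x := hinv u) in *. set (y := hinv v) in *.
    pose proof (Heq x y A1 B1) as E. rewrite A2, B2 in E. fold I hinv in E |- *.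
    set (rt := (t * g x + (1 - t) * g y) / (t * f x + (1 - t) * f y)) in *.
    pose proof (Hf x A1). pose proof (Hf y B1).
    assert (Hex : exists z, I z /\ phi z = rt).
    { destruct (ivt_I a b phi x y rt Hpc A1 B1) as [z [Hz [_ Ez]]].
      - unfold phi, rt.
        replace ((t * g x + (1 - t) * g y) / (t * f x + (1 - t) * f y))
          with ((t * f x * (g x / f x) + (1 - t) * f y * (g y / f y)) / (t * f x + (1 - t) * f y)) by (field; repeat split; nra).
        assert (0 < t * f x) by nra. assert (0 < (1 - t) * f y) by nra.
        set (A := t * f x) in *. set (B := (1 - t) * f y) in *.
        set (p1 := g x / f x). set (p2 := g y / f y).
        destruct (Rle_dec p1 p2).
        + rewrite Rmin_left, Rmax_right by lra. split.
          * apply Rmult_le_reg_r with (A + B). lra. unfold Rdiv. rewrite Rmult_assoc, Rinv_l by lra. nra.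
          * apply Rmult_le_reg_r with (A + B). lra. unfold Rdiv. rewrite Rmult_assoc, Rinv_l by lra. nra.
        + rewrite Rmin_right, Rmax_left by lra. split.
          * apply Rmult_le_reg_r with (A + B). lra. unfold Rdiv. rewrite Rmult_assoc, Rinv_l by lra. nra.
          * apply Rmult_le_reg_r with (A + B). lra. unfold Rdiv. rewrite Rmult_assoc, Rinv_l by lra. nra.
      - exists z; auto. }
    destruct (inv_on_spec I phi rt Hex) as [C1 C2].
    change (inv_on I (fun z => g z / f z) rt) with (inv_on I phi rt) in E.
    rewrite <- E. change (g (inv_on I phi rt) / f (inv_on I phi rt)) with (phi (inv_on I phi rt)).
    rewrite C2. unfold rt. field. nra.
Qed.

Theorem corollary3p2 (a b : Rbar) (t : R) (f g h : R -> R) :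
  Rbar_lt a b ->
  0 < t < 1 ->
  (forall x, in_I a b x -> 0 < f x) ->
  continuous_on_set (in_I a b) (fun x => g x / f x) ->
  strict_mono_on (in_I a b) (fun x => g x / f x) ->
  continuous_on_set (in_I a b) h ->
  strict_mono_on (in_I a b) h ->
  ((forall x y, in_I a b x -> in_I a b y ->
      inv_on (in_I a b) (fun z => g z / f z)
        ((t * g x + (1 - t) * g y) / (t * f x + (1 - t) * f y))
      = inv_on (in_I a b) h (t * h x + (1 - t) * h y))
   <->
   exists p : R, (t - 1/2) * p = 0 /\
     pair_equiv_on (in_I a b) f g (fun x => Sp p (h x)) (fun x => Cp p (h x))).
Proof.
  intros Hab Ht Hf Hpc Hpm Hhc Hhm. split.
  - intros Heq.
    pose proof (build_hyp a b t f g h Ht Hf Hpc Hpm Hhc Hhm Heq) as H.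
    destruct (I_ne a b Hab) as [x0 Hx0].
    destruct (core _ _ _ _ _ H (h x0) ltac:(exists x0; auto)) as [p [Hp [a1 [b1 [a2 [b2 [Hd E]]]]]]].
    exists p. split; auto.
    set (D := a1 * b2 - a2 * b1) in *.
    exists (b2 / D), (- b1 / D), (- a2 / D), (a1 / D). split.
    + intros K. apply Hd.
      assert (K' : (b2 / D) * (a1 / D) - (- a2 / D) * (- b1 / D) = 0) by lra.
      replace ((b2 / D) * (a1 / D) - (- a2 / D) * (- b1 / D)) with (1 / D) in K' by (unfold D in *; field; auto).
      exfalso. unfold Rdiv in K'. rewrite Rmult_1_l in K'. apply (Rinv_neq_0_compat D Hd). auto.
    + intros x Hx.
      assert (Hhx : inv_on (in_I a b) h (h x) = x).
      { apply inv_on_unique; auto. apply smono_inj; auto. }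
      destruct (E (h x) ltac:(exists x; auto)) as [E1 E2]. cbv beta in E1, E2. rewrite Hhx in E1, E2.
      rewrite E1, E2. split; unfold D in *; field; auto.
  - intros [p [Hp [a0 [b0 [c0 [d0 [Hd E]]]]]]] x y Hx Hy.
    set (w := t * h x + (1 - t) * h y).
    assert (hinj := smono_inj _ h Hhm).
    assert (pinj := smono_inj _ (fun z => g z / f z) Hpm).
    destruct (ivt_I a b h x y w Hhc Hx Hy) as [z [Hz [_ Ez]]].
    { unfold w. destruct (Rle_dec (h x) (h y)).
      - rewrite Rmin_left, Rmax_right by lra. split; nra.
      - rewrite Rmin_right, Rmax_left by lra. split; nra. }
    rewrite (inv_on_unique _ h w z hinj Hz Ez).
    apply inv_on_unique; auto.
    pose proof (Hf x Hx). pose proof (Hf y Hy). pose proof (Hf z Hz).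
    destruct (E x Hx) as [Sx Cx]. destruct (E y Hy) as [Sy Cy]. destruct (E z Hz) as [Sz Cz].
    assert (Key : t * (Sp p (h x) * Cp p (h z) - Cp p (h x) * Sp p (h z)) +
                  (1 - t) * (Sp p (h y) * Cp p (h z) - Cp p (h y) * Sp p (h z)) = 0).
    { rewrite !Sp_sub. rewrite Ez. unfold w.
      destruct (Req_dec p 0) as [Hp0|Hp0].
      - subst p. rewrite !Sp_zero. ring.
      - assert (Th : t = 1/2).
        { apply Rmult_integral in Hp. destruct Hp; [lra | contradiction]. }
        rewrite Th.
        replace (h y - (1 / 2 * h x + (1 - 1 / 2) * h y)) with (- (h x - (1 / 2 * h x + (1 - 1 / 2) * h y))) by field.
        rewrite Sp_odd. field. }
    rewrite Sx, Cx, Sy, Cy, Sz, Cz in Key.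
    assert (Key2 : (a0 * d0 - c0 * b0) * (t * (f x * g z - g x * f z) + (1 - t) * (f y * g z - g y * f z)) = 0).
    { rewrite <- Key. ring. }
    apply Rmult_integral in Key2. destruct Key2 as [K|K]. { exfalso. apply Hd. lra. }
    cbv beta.
    assert (Dpos : 0 < t * f x + (1 - t) * f y) by nra.
    assert (K2 : g z * (t * f x + (1 - t) * f y) = (t * g x + (1 - t) * g y) * f z) by lra.
    apply (Rmult_eq_reg_r (f z * (t * f x + (1 - t) * f y))); [| apply Rgt_not_eq; nra].
    unfold Rdiv.
    replace (g z * / f z * (f z * (t * f x + (1 - t) * f y))) with (g z * (t * f x + (1 - t) * f y)) by (field; lra).
    rewrite K2. field. lra.
Qed.
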